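(* For $n\geq 3$, the groups $H_n$ and $VP_n$ are not isomorphic.
   Context: The virtual braid group $VB_n$ is the group with generators $\sigma_i,\rho_i$ ($i=1,\dots,n-1$) and defining relations: $\sigma_i\sigma_{i+1}\sigma_i=\sigma_{i+1}\sigma_i\sigma_{i+1}$ ($1\le i\le n-2$); $\sigma_i\sigma_j=\sigma_j\sigma_i$ ($|i-j|\geq 2$); $\rho_i\rho_{i+1}\rho_i=\rho_{i+1}\rho_i\rho_{i+1}$ ($1\le i\le n-2$); $\rho_i\rho_j=\rho_j\rho_i$ ($|i-j|\geq 2$); $\rho_i^2=1$; $\sigma_i\rho_j=\rho_j\sigma_i$ ($|i-j|\geq2$); $\rho_i\rho_{i+1}\sigma_i=\sigma_{i+1}\rho_i\rho_{i+1}$ ($1\le i\le n-2$). $H_n$ is the kernel of $\mu:VB_n\to S_n$, $\mu(\sigma_i)=1$, $\mu(\rho_i)=(i\ i{+}1)$ (equivalently, the normal closure of $\langle\sigma_1,\dots,\sigma_{n-1}\rangle$). $VP_n$ is the kernel of $\nu:VB_n\to S_n$, $\nu(\sigma_i)=\nu(\rho_i)=(i\ i{+}1)$. *)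

(* Defs.v *)
(* The virtual braid group VB_n is encoded as
   words in the generators sigma_i, rho_i (and their inverses) modulo the
   congruence generated by free cancellation and the defining relations.
   Subgroups are predicates on words closed under that congruence; a group
   isomorphism between two such subgroups is a map on representatives that
   is well defined, multiplicative, injective and surjective modulo the
   congruence. *)
From mathcomp Require Import all_boot.
Set Implicit Arguments. Unset Strict Implicit. Unset Printing Implicit Defensive.

(* Generators, indexed 1 .. n-1 as in the paper. *)
Inductive letter := Sig of nat | Rho of nat.

(* A signed letter: (x, false) is x, (x, true) is x^-1. *)
Definition word := seq (letter * bool).

Definition lindex (x : letter) : nat := match x with Sig i => i | Rho i => i end.
Definition valid_letter (n : nat) (x : letter) : bool :=
  (1 <= lindex x <= n.-1)%N.
Definition wf_word (n : nat) (w : word) : bool :=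
  all (fun p => valid_letter n p.1) w.

Definition pos (x : letter) : letter * bool := (x, false).
Definition far (i j : nat) : bool := (i.+2 <= j)%N || (j.+2 <= i)%N.

Inductive vrel (n : nat) : word -> word -> Prop :=
| rel_ss3 i : (1 <= i)%N -> (i <= n - 2)%N ->
    vrel n [:: pos (Sig i); pos (Sig i.+1); pos (Sig i)]
           [:: pos (Sig i.+1); pos (Sig i); pos (Sig i.+1)]
| rel_ss2 i j : (1 <= i <= n.-1)%N -> (1 <= j <= n.-1)%N -> far i j ->
    vrel n [:: pos (Sig i); pos (Sig j)] [:: pos (Sig j); pos (Sig i)]
| rel_rr3 i : (1 <= i)%N -> (i <= n - 2)%N ->
    vrel n [:: pos (Rho i); pos (Rho i.+1); pos (Rho i)]
           [:: pos (Rho i.+1); pos (Rho i); pos (Rho i.+1)]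
| rel_rr2 i j : (1 <= i <= n.-1)%N -> (1 <= j <= n.-1)%N -> far i j ->
    vrel n [:: pos (Rho i); pos (Rho j)] [:: pos (Rho j); pos (Rho i)]
| rel_rsq i : (1 <= i <= n.-1)%N ->
    vrel n [:: pos (Rho i); pos (Rho i)] [::]
| rel_sr2 i j : (1 <= i <= n.-1)%N -> (1 <= j <= n.-1)%N -> far i j ->
    vrel n [:: pos (Sig i); pos (Rho j)] [:: pos (Rho j); pos (Sig i)]
| rel_mixed i : (1 <= i)%N -> (i <= n - 2)%N ->
    vrel n [:: pos (Rho i); pos (Rho i.+1); pos (Sig i)]
           [:: pos (Sig i.+1); pos (Rho i); pos (Rho i.+1)].

Inductive veq (n : nat) : word -> word -> Prop :=
| veq_refl w : veq n w w
| veq_sym u v : veq n u v -> veq n v u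
| veq_trans u v w : veq n u v -> veq n v w -> veq n u w
| veq_rel u v a b : vrel n a b -> veq n (u ++ a ++ v) (u ++ b ++ v)
| veq_free u v x e : valid_letter n x ->
    veq n (u ++ [:: (x, e); (x, ~~ e)] ++ v) (u ++ v).

Definition swapn (i k : nat) : nat :=
  if k == i then i.+1 else if k == i.+1 then i else k.

Definition mu_letter (x : letter) : nat -> nat :=
  match x with Sig _ => id | Rho i => swapn i end.
Definition nu_letter (x : letter) : nat -> nat :=
  match x with Sig i => swapn i | Rho i => swapn i end.

(* image of a word (transpositions are involutions, so inverses map alike) *)
Definition word_perm (f : letter -> nat -> nat) (w : word) : nat -> nat :=
  foldr (fun p g => f p.1 \o g) id w.

(* H_n = ker mu, VP_n = ker nu (as sets of representing words). *)
Definition inH (n : nat) (w : word) : Prop :=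
  wf_word n w /\ forall k, word_perm mu_letter w k = k.
Definition inVP (n : nat) (w : word) : Prop :=
  wf_word n w /\ forall k, word_perm nu_letter w k = k.

Definition subgroup_iso (n : nat) (A B : word -> Prop) (f : word -> word) : Prop :=
  [/\ (forall u, A u -> B (f u)),
      (forall u v, A u -> A v -> veq n u v -> veq n (f u) (f v)),
      (forall u v, A u -> A v -> veq n (f (u ++ v)) (f u ++ f v)),
      (forall u v, A u -> A v -> veq n (f u) (f v) -> veq n u v)
    & (forall w, B w -> exists2 u, A u & veq n (f u) w)].

(* Main.v *)
Require Import Defs.
From mathcomp Require Import all_boot zify.
Set Implicit Arguments. Unset Strict Implicit. Unset Printing Implicit Defensive.

Lemma swapn_out i k : k != i -> k != i.+1 -> swapn i k = k.
Proof. by rewrite /swapn => /negbTE -> /negbTE ->. Qed.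
Lemma swapn_l i : swapn i i = i.+1. Proof. by rewrite /swapn eqxx. Qed.
Lemma swapn_r i : swapn i i.+1 = i. Proof. by rewrite /swapn eqxx (gtn_eqF (ltnSn i)). Qed.

Ltac swcase k i :=
  have [->|?] := eqVneq k i; [|have [->|?] := eqVneq k i.+1].

Lemma swapn_out' i k : k <> i -> k <> i.+1 -> swapn i k = k.
Proof. by move=> /eqP ? /eqP ?; rewrite swapn_out. Qed.

Ltac swstep := match goal with
 | |- context[swapn ?i ?i] => rewrite (swapn_l i)
 | |- context[swapn ?i ?i.+1] => rewrite (swapn_r i)
 | |- context[swapn ?i ?k] => rewrite (@swapn_out' i k); [|lia|lia]
end.
Ltac swsimpl := repeat swstep.

Lemma swapnK i k : swapn i (swapn i k) = k.
Proof.
have [->|?] := eqVneq k i; [by swsimpl|].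
have [->|?] := eqVneq k i.+1; [by swsimpl|].
by rewrite !swapn_out.
Qed.

Lemma swapn_far i j k : far i j -> swapn i (swapn j k) = swapn j (swapn i k).
Proof.
rewrite /far => H.
have [->|?] := eqVneq k i; [by swsimpl|].
have [->|?] := eqVneq k i.+1; [by swsimpl|].
have [->|?] := eqVneq k j; [by swsimpl|].
have [->|?] := eqVneq k j.+1; [by swsimpl|].
by rewrite !swapn_out.
Qed.

Lemma swapn_braid i k : swapn i (swapn i.+1 (swapn i k)) = swapn i.+1 (swapn i (swapn i.+1 k)).
Proof.
have [->|?] := eqVneq k i; [by swsimpl|].
have [->|?] := eqVneq k i.+1; [by swsimpl|].
have [->|?] := eqVneq k i.+2; [by swsimpl|].
by rewrite !swapn_out.
Qed.

Definition winv (w : word) : word := rev (map (fun p => (p.1, ~~ p.2)) w).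
Definition cj (r y : word) : word := r ++ y ++ winv r.

Lemma winv_cat u v : winv (u ++ v) = winv v ++ winv u.
Proof. by rewrite /winv map_cat rev_cat. Qed.
Lemma winv_cons p w : winv (p :: w) = winv w ++ [:: (p.1, ~~ p.2)].
Proof. by rewrite /winv /= rev_cons cats1. Qed.
Lemma inv_nil : winv [::] = [::]. Proof. by []. Qed.

Lemma cj_cat r s y : cj (r ++ s) y = cj r (cj s y).
Proof. by rewrite /cj winv_cat !catA. Qed.

Lemma wf_cat n u v : wf_word n (u ++ v) = wf_word n u && wf_word n v.
Proof. by rewrite /wf_word all_cat. Qed.
Lemma wf_inv n w : wf_word n (winv w) = wf_word n w.
Proof. by rewrite /wf_word /winv all_rev all_map. Qed.

Definition wp := word_perm.

Lemma foldr_app (f : letter -> nat -> nat) g u k :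
  foldr (fun (p : letter * bool) (h : nat -> nat) => f p.1 \o h) g u k = word_perm f u (g k).
Proof. by elim: u k => //= p u IH k; rewrite IH. Qed.

Lemma wperm_cat f u v k : word_perm f (u ++ v) k = word_perm f u (word_perm f v k).
Proof. by rewrite /word_perm foldr_cat foldr_app. Qed.

Lemma wperm_cons f p w k : word_perm f (p :: w) k = f p.1 (word_perm f w k).
Proof. by []. Qed.

Lemma wperm_inv f w : (forall x k, f x (f x k) = k) ->
  forall k, word_perm f (w ++ winv w) k = k.
Proof.
move=> Hf; elim: w => //= p w IH k.
by rewrite winv_cons catA wperm_cat IH /= Hf.
Qed.

Lemma wperm_inv' f w : (forall x k, f x (f x k) = k) ->
  forall k, word_perm f (winv w ++ w) k = k.
Proof.
move=> Hf; elim: w => //= p w IH k.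
by rewrite winv_cons -catA wperm_cat /= Hf -wperm_cat IH.
Qed.

Lemma mu_inv x k : mu_letter x (mu_letter x k) = k.
Proof. by case: x => //= i; rewrite swapnK. Qed.
Lemma nu_inv x k : nu_letter x (nu_letter x k) = k.
Proof. by case: x => //= i; rewrite swapnK. Qed.

Section V.
Variable n : nat.

Lemma veq_ctx p s u v : veq n u v -> veq n (p ++ u ++ s) (p ++ v ++ s).
Proof.
elim=> {u v}.
- by move=> w; apply: veq_refl.
- by move=> u v _ H; apply: veq_sym.
- by move=> u v w _ H1 _ H2; apply: veq_trans H2.
- move=> u v a b H.
  have := veq_rel (p ++ u) (v ++ s) H. by rewrite !catA.
- move=> u v x e Hx.
  have := veq_free (p ++ u) (v ++ s) e Hx. by rewrite !catA.
Qed.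

Lemma veq_catl p u v : veq n u v -> veq n (p ++ u) (p ++ v).
Proof. by move=> H; have := veq_ctx p [::] H; rewrite !cats0. Qed.
Lemma veq_catr s u v : veq n u v -> veq n (u ++ s) (v ++ s).
Proof. by move=> H; have := veq_ctx [::] s H. Qed.
Lemma veq_cat2 u u' v v' : veq n u u' -> veq n v v' -> veq n (u ++ v) (u' ++ v').
Proof. move=> H1 H2; apply: veq_trans (veq_catr _ H1) (veq_catl _ H2). Qed.

Lemma cancel_r w : wf_word n w -> veq n (w ++ winv w) [::].
Proof.
elim: w => [|[x e] w IH] /=; first by move=> _; apply: veq_refl.
case/andP=> Hx Hw.
rewrite winv_cons /= catA.
apply: veq_trans (veq_catl [:: (x, e)] (veq_catr [:: (x, ~~ e)] (IH Hw))) _.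
exact: (veq_free [::] [::] e Hx).
Qed.

Lemma cancel_l w : wf_word n w -> veq n (winv w ++ w) [::].
Proof.
elim: w => [|[x e] w IH] /=; first by move=> _; apply: veq_refl.
case/andP=> Hx Hw.
rewrite winv_cons /= -catA.
apply: veq_trans (veq_catl (winv w) _) _; last by exact: IH.
have := veq_free [::] w (~~ e) Hx. by rewrite negbK.
Qed.

Lemma conj_veq r y y' : veq n y y' -> veq n (cj r y) (cj r y').
Proof. exact: veq_ctx. Qed.

End V.

Lemma vrel_mu n a b : vrel n a b -> forall k, word_perm mu_letter a k = word_perm mu_letter b k.
Proof.
case=> {a b} /= *; rewrite /word_perm /= ?swapnK //.
- exact: swapn_braid.
- exact: swapn_far.
Qed.

Lemma vrel_nu n a b : vrel n a b -> forall k, word_perm nu_letter a k = word_perm nu_letter b k.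
Proof.
case=> {a b} /= *; rewrite /word_perm /= ?swapnK //.
all: first [exact: swapn_braid | by apply: swapn_far].
Qed.

Lemma veq_mu n u v : veq n u v -> forall k, word_perm mu_letter u k = word_perm mu_letter v k.
Proof.
elim.
- by [].
- by move=> u' v' _ H k; rewrite H.
- by move=> u' v' w _ H1 _ H2 k; rewrite H1 H2.
- by move=> u' v' a b H k; rewrite !wperm_cat (vrel_mu H).
- by move=> u' v' x e _ k; rewrite !wperm_cat /word_perm /= mu_inv.
Qed.

Fixpoint cw j d : word := if d is d'.+1 then pos (Rho (j + d')) :: cw j d' else [::].

Lemma cw_split j a b : cw j (a + b) = cw (j + a) b ++ cw j a.
Proof. by elim: b => [|b IH] /=; rewrite ?addn0 // addnS /= IH addnA. Qed.

Lemma cw_perm j d : word_perm mu_letter (cw j d) j = j + d.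
Proof.
elim: d => [|d IH]; first by rewrite addn0.
by rewrite wperm_cons IH /= swapn_l addnS.
Qed.

Section C.
Variable n : nat.

Definition rw j (w : word) : bool :=
  all (fun p => if p.1 is Rho i then (j <= i) && (i < n) else false) w.

Lemma rw_perm j u : rw j.+1 u -> word_perm mu_letter u j = j.
Proof.
elim: u => //= [[x e] u IH] /andP[Hx Hu] /=.
case: x Hx => // i /andP[H1 H2]; rewrite IH //=.
apply: swapn_out; apply/eqP; lia.
Qed.

Lemma rsq_inv i : 0 < i < n -> veq n [:: (Rho i, true)] [:: (Rho i, false)].
Proof.
move=> Hi.
have Hv : valid_letter n (Rho i) by rewrite /valid_letter /=; lia.
apply: veq_trans (_ : veq n [:: (Rho i, true); (Rho i, false); (Rho i, false)] _).
  apply: veq_sym. have := veq_rel [:: (Rho i, true)] [::] (@rel_rsq n i ltac:(lia)).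
  by rewrite cats0.
exact: (veq_free [::] [:: (Rho i, false)] true Hv).
Qed.

Lemma sign1 u v i e e' : 0 < i < n ->
  veq n (u ++ (Rho i, e) :: v) (u ++ (Rho i, e') :: v).
Proof.
move=> Hi.
have H := rsq_inv Hi.
case: e; case: e'; try apply: veq_refl.
- exact: (veq_ctx u v H).
- exact: (veq_ctx u v (veq_sym H)).
Qed.

Lemma comm_block m j d s : 0 < m < n -> 0 < j -> j + d <= n ->
  (m + 2 <= j) || (j + d + 1 <= m) ->
  veq n (pos (Rho m) :: cw j d ++ s) (cw j d ++ pos (Rho m) :: s).
Proof.
move=> Hm Hj.
elim: d => [|d IH] Hd Hf /=; first by apply: veq_refl.
apply: veq_trans (_ : veq n (pos (Rho (j + d)) :: pos (Rho m) :: cw j d ++ s) _).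
  have H : vrel n [:: pos (Rho m); pos (Rho (j + d))] [:: pos (Rho (j + d)); pos (Rho m)].
    apply: rel_rr2; rewrite /far; lia.
  exact: (veq_rel [::] (cw j d ++ s) H).
apply: (veq_catl [:: pos (Rho (j + d))]); apply: IH; lia.
Qed.

Lemma NF j w : 0 < j -> j <= n -> rw j w ->
  exists d u, [/\ j + d <= n, rw j.+1 u & veq n w (cw j d ++ u)].
Proof.
move=> Hj Hjn; elim: w => [|[x e] w IH] /=.
  by move=> _; exists 0, [::]; split => //; [lia | apply: veq_refl].
case: x => // i /andP[/andP[Hi1 Hi2] Hw].
have [d [u [Hd Hu Hv]]] := IH Hw.
have Hi : 0 < i < n by lia.
have Hv1 : veq n ((Rho i, e) :: w) (pos (Rho i) :: cw j d ++ u).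
  apply: veq_trans (veq_catl [:: (Rho i, e)] Hv) _.
  exact: (sign1 [::] (cw j d ++ u) e false Hi).
have [E|NE1] := eqVneq i (j + d).
  exists d.+1, u; split => //; first lia.
  by rewrite /= -E.
have [E|NE2] := eqVneq i.+1 (j + d).
  case: d E Hd Hv Hv1 {NE1} => [|d] E Hd Hv Hv1; first lia.
  exists d, u; split => //; first lia.
  apply: veq_trans Hv1 _ => /=.
  have -> : i = j + d by lia.
  exact: (veq_rel [::] (cw j d ++ u) (@rel_rsq n (j + d) ltac:(lia))).
have [Hbig|Hsmall] := leqP (j + d + 1) i.
  exists d, (pos (Rho i) :: u); split => //=.
    rewrite Hu andbT; lia.
  apply: veq_trans Hv1 _; apply: comm_block => //; lia.
(* i + 2 <= j + d *)
set a := i - j.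
have Ei : i = j + a by rewrite /a; lia.
have [b Eb] : exists b, d = a.+2 + b by exists (d - a.+2); lia.
exists d, (pos (Rho i.+1) :: u); split => //=.
  rewrite Hu andbT; lia.
apply: veq_trans Hv1 _.
rewrite Eb cw_split /= -catA /=.
have E1 : j + a.+2 = i.+2 by lia.
have E2 : j + a.+1 = i.+1 by lia.
have E3 : j + a = i by lia.
rewrite E1 E2 E3 -catA /=.
eapply veq_trans; first (apply: comm_block; lia).
eapply veq_trans.
  apply: (veq_catl (cw i.+2 b) (veq_rel [::] (cw j a ++ u) (@rel_rr3 n i _ _))); lia.
apply: (veq_catl (cw i.+2 b)) => /=.
apply: (veq_catl [:: pos (Rho i.+1); pos (Rho i)]).
apply: comm_block; lia.
Qed.

Lemma coxeter_gen m : forall j w, n - j = m -> 0 < j -> j <= n -> rw j w ->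
  (forall k, word_perm mu_letter w k = k) -> veq n w [::].
Proof.
elim: m => [|m IH] j w Em Hj Hjn Hw Hp.
  have Ej : j = n by lia.
  case: w Hw {Hp} => [|[x e] w] /=; first by move=> _; apply: veq_refl.
  case: x => // i; lia.
have [d [u [Hd Hu Hv]]] := NF Hj Hjn Hw.
have Hd0 : d = 0.
  have := Hp j; rewrite (veq_mu Hv j) wperm_cat (rw_perm Hu) cw_perm; lia.
rewrite Hd0 /= in Hv.
eapply veq_trans; first exact Hv.
apply: (IH j.+1) => //; try lia.
by move=> k; rewrite -(veq_mu Hv) Hp.
Qed.

End C.

Definition sg i : word := [:: pos (Sig i)].
Definition rh i : letter * bool := pos (Rho i).

Ltac vstep H := eapply veq_trans; [exact H|].

Section Facts.
Variable n : nat.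

Lemma conj_triv r y : wf_word n r -> veq n r [::] -> veq n (cj r y) y.
Proof.
move=> Hr Hv.
have Hi : veq n (winv r) [::].
  apply: veq_trans (cancel_l Hr).
  have := veq_catl (winv r) (veq_sym Hv); by rewrite cats0.
have := veq_cat2 Hv (veq_catl y Hi); by rewrite cats0.
Qed.

Lemma M1 k : 0 < k -> k.+1 < n -> veq n (cj [:: rh k.+1; rh k] (sg k.+1)) (sg k).
Proof.
move=> H1 H2; rewrite /cj /winv /=.
vstep (@sign1 n [:: rh k.+1; rh k; pos (Sig k.+1)] [:: (Rho k.+1, true)] k true false ltac:(lia)).
vstep (@sign1 n [:: rh k.+1; rh k; pos (Sig k.+1); rh k] [::] k.+1 true false ltac:(lia)).
vstep (veq_sym (veq_rel [:: rh k.+1; rh k] [::] (@rel_mixed n k H1 ltac:(lia)))).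
vstep (veq_rel [:: rh k.+1] [:: rh k.+1; pos (Sig k)] (@rel_rsq n k ltac:(lia))).
vstep (veq_rel [::] [:: pos (Sig k)] (@rel_rsq n k.+1 ltac:(lia))).
exact: veq_refl.
Qed.

Lemma M2 k : 0 < k -> k.+1 < n -> veq n (cj [:: rh k; rh k.+1] (sg k)) (sg k.+1).
Proof.
move=> H1 H2; rewrite /cj /winv /=.
vstep (@sign1 n [:: rh k; rh k.+1; pos (Sig k)] [:: (Rho k, true)] k.+1 true false ltac:(lia)).
vstep (@sign1 n [:: rh k; rh k.+1; pos (Sig k); rh k.+1] [::] k true false ltac:(lia)).
vstep (veq_rel [::] [:: rh k.+1; rh k] (@rel_mixed n k H1 ltac:(lia))).
vstep (veq_rel [:: pos (Sig k.+1); rh k] [:: rh k] (@rel_rsq n k.+1 ltac:(lia))).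
vstep (veq_rel [:: pos (Sig k.+1)] [::] (@rel_rsq n k ltac:(lia))).
exact: veq_refl.
Qed.

Lemma F2 i j : 0 < i < n -> 0 < j < n -> far i j ->
  veq n (cj [:: rh j; rh i] (sg i)) (cj [:: rh i] (sg i)).
Proof.
move=> Hi Hj Hf; rewrite /cj /winv /=.
have Hf' : far j i by move: Hf; rewrite /far; lia.
have Vi : (1 <= i <= n.-1) by lia.
have Vj : (1 <= j <= n.-1) by lia.
vstep (@sign1 n [:: rh j; rh i; pos (Sig i)] [:: (Rho j, true)] i true false Hi).
vstep (veq_rel [::] [:: pos (Sig i); rh i; (Rho j, true)] (@rel_rr2 n j i Vj Vi Hf')).
vstep (veq_sym (veq_rel [:: rh i] [:: rh i; (Rho j, true)] (@rel_sr2 n i j Vi Vj Hf))).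
vstep (veq_rel [:: rh i; pos (Sig i)] [:: (Rho j, true)] (@rel_rr2 n j i Vj Vi Hf')).
have Vj' : valid_letter n (Rho j) by rewrite /valid_letter /=; lia.
vstep (veq_free [:: rh i; pos (Sig i); rh i] [::] false Vj').
vstep (@sign1 n [:: rh i; pos (Sig i)] [::] i false true Hi).
exact: veq_refl.
Qed.

Lemma M3 k : 0 < k -> k.+1 < n ->
  veq n (cj [:: rh k.+1] (sg k)) (cj [:: rh k] (sg k.+1)).
Proof.
move=> H1 H2.
vstep (conj_veq [:: rh k.+1] (veq_sym (M1 H1 H2))).
rewrite -cj_cat -[[:: rh k.+1] ++ _]/([:: rh k.+1; rh k.+1] ++ [:: rh k]) cj_cat.
apply: conj_triv; first by rewrite /wf_word /= /valid_letter /=; lia.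
exact: (veq_rel [::] [::] (@rel_rsq n k.+1 ltac:(lia))).
Qed.

Lemma cj_sign r s j e y : 0 < j < n ->
  veq n (cj (r ++ (Rho j, e) :: s) y) (cj (r ++ rh j :: s) y).
Proof.
move=> Hj; rewrite /cj !winv_cat !winv_cons /= -!catA /=.
vstep (@sign1 n r (s ++ y ++ winv s ++ (Rho j, ~~ e) :: winv r) j e false Hj).
have := @sign1 n (r ++ rh j :: s ++ y ++ winv s) (winv r) j (~~ e) true Hj.
have E : forall z, (r ++ rh j :: s ++ y ++ winv s) ++ z :: winv r = 
   r ++ rh j :: s ++ y ++ winv s ++ z :: winv r by move=> z; rewrite -catA /= -!catA.
by rewrite !E.
Qed.

End Facts.

Section H.
Variable n : nat.
Hypothesis hn : 3 <= n.

Lemma inH_nil : inH n [::]. Proof. by split. Qed.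
Lemma inH_cat u v : inH n u -> inH n v -> inH n (u ++ v).
Proof.
case=> Hu Pu [Hv Pv]; split; first by rewrite wf_cat Hu.
by move=> k; rewrite wperm_cat Pv Pu.
Qed.
Lemma inH_conj r y : wf_word n r -> inH n y -> inH n (cj r y).
Proof.
move=> Hr [Hy Py]; split; first by rewrite /cj !wf_cat wf_inv Hr Hy.
move=> k; rewrite /cj !wperm_cat Py -wperm_cat; exact: wperm_inv mu_inv _.
Qed.
Lemma inH_sg i : 0 < i < n -> inH n (sg i).
Proof. by move=> Hi; split => //=; rewrite /wf_word /= /valid_letter /= andbT; lia. Qed.
Lemma inH_sgn i e : 0 < i < n -> inH n [:: (Sig i, e)].
Proof. by move=> Hi; split => //=; rewrite /wf_word /= /valid_letter /= andbT; lia. Qed.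

Lemma rw_wf r : rw n 1 r -> wf_word n r.
Proof.
elim: r => //= [[x e] r IH] /andP[Hx Hr]; rewrite /wf_word /= in IH *.
rewrite IH // andbT /valid_letter; case: x Hx => //= i; lia.
Qed.

Lemma rw_cat u v : rw n 1 (u ++ v) = rw n 1 u && rw n 1 v.
Proof. by rewrite /rw all_cat. Qed.

Variable psi : word -> bool.
Hypothesis Hwd : forall u v, inH n u -> inH n v -> veq n u v -> psi u = psi v.
Hypothesis Hadd : forall u v, inH n u -> inH n v -> psi (u ++ v) = psi u (+) psi v.

Lemma psi_nil : psi [::] = false.
Proof. by have := Hadd inH_nil inH_nil; case: (psi [::]). Qed.

Lemma psi_conj_cat r a b : wf_word n r -> inH n a -> inH n b ->
  psi (cj r (a ++ b)) = psi (cj r a) (+) psi (cj r b).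
Proof.
move=> Hr Ha Hb.
rewrite -Hadd; try exact: inH_conj.
apply: Hwd; first (apply: inH_conj => //; exact: inH_cat).
  by apply: inH_cat; apply: inH_conj.
have -> : cj r a ++ cj r b = r ++ a ++ (winv r ++ r) ++ (b ++ winv r) by rewrite /cj !catA.
rewrite /cj -catA; apply: veq_catl; apply: veq_catl; apply: veq_sym.
exact: (veq_catr (b ++ winv r) (cancel_l Hr)).
Qed.

Lemma psi_conj_veq r y y' : wf_word n r -> inH n y -> inH n y' -> veq n y y' ->
  psi (cj r y) = psi (cj r y').
Proof. move=> Hr Hy Hy' H; apply: Hwd; try exact: inH_conj. exact: conj_veq. Qed.

Lemma Br r i : wf_word n r -> 0 < i -> i.+1 < n ->
  psi (cj r (sg i.+1)) = psi (cj r (sg i)).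
Proof.
move=> Hr Hi Hin.
have Ha : inH n (sg i) by apply: inH_sg; lia.
have Hb : inH n (sg i.+1) by apply: inH_sg; lia.
have Hab := inH_cat Ha (inH_cat Hb Ha).
have Hba := inH_cat Hb (inH_cat Ha Hb).
have := @psi_conj_veq r _ _ Hr Hab Hba (veq_rel [::] [::] (@rel_ss3 n i Hi ltac:(lia))).
rewrite /= -[[:: pos (Sig i); pos (Sig i.+1); pos (Sig i)]]/(sg i ++ sg i.+1 ++ sg i).
rewrite -[[:: pos (Sig i.+1); pos (Sig i); pos (Sig i.+1)]]/(sg i.+1 ++ sg i ++ sg i.+1).
rewrite !psi_conj_cat //; try exact: inH_cat.
by do 2 case: (psi (cj r (sg _))).
Qed.


Lemma all_idx r : wf_word n r -> forall i, 0 < i < n -> psi (cj r (sg i)) = psi (cj r (sg 1)).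
Proof.
move=> Hr; elim=> [|i IH] Hi; first lia.
case: i IH Hi => [|i] IH Hi //.
rewrite Br //; try lia; apply: IH; lia.
Qed.

Hypothesis H1 : psi (sg 1) = false.
Hypothesis H2 : psi (cj [:: rh 1] (sg 1)) = false.

Lemma wf_rh i : 0 < i < n -> wf_word n [:: rh i].
Proof. by move=> Hi; rewrite /wf_word /= /valid_letter /= andbT; lia. Qed.
Lemma wf_rh2 i j : 0 < i < n -> 0 < j < n -> wf_word n [:: rh i; rh j].
Proof. by move=> Hi Hj; rewrite /wf_word /= /valid_letter /= andbT; lia. Qed.

Lemma base2 i : 0 < i < n -> psi (cj [:: rh i] (sg i)) = false.
Proof.
elim: i => [|i IH] Hi; first lia.
case: i IH Hi => [|k] IH Hi; first exact: H2.
have Hk : 0 < k.+1 < n by lia.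
rewrite Br; try lia; last exact: wf_rh.
have Hu : inH n (cj [:: rh k.+2] (sg k.+1)).
  apply: inH_conj; [exact: wf_rh | apply: inH_sg; lia].
have Hv : inH n (cj [:: rh k.+1] (sg k.+2)).
  apply: inH_conj; [exact: wf_rh | apply: inH_sg; lia].
rewrite (Hwd Hu Hv (M3 _ _)); try lia.
rewrite Br; try lia; exact: wf_rh.
Qed.

Lemma mainP r : rw n 1 r ->
  (forall i, 0 < i < n -> psi (cj r (sg i)) = false) /\
  (forall i, 0 < i < n -> psi (cj (r ++ [:: rh i]) (sg i)) = false).
Proof.
elim/last_ind: r => [|r0 x IH] Hr.
  split; last exact: base2.
  by move=> i Hi; rewrite all_idx //; exact: H1.
move: Hr; rewrite -cats1 rw_cat => /andP[Hr0 Hx].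
case: x Hx => [[//|j] e] /= /andP[/andP[Hj1 Hj2] _].
have Hj : 0 < j < n by lia.
have [IH1 IH2] := IH Hr0.
have Wr0 := rw_wf Hr0.
set r' := r0 ++ [:: rh j].
have Wr' : wf_word n r' by rewrite wf_cat Wr0 wf_rh.
have P1' : forall i, 0 < i < n -> psi (cj r' (sg i)) = false.
  by move=> i Hi; rewrite all_idx // -(all_idx Wr' Hj) IH2.
have P2' : forall i, 0 < i < n -> psi (cj (r' ++ [:: rh i]) (sg i)) = false.
  move=> i Hi.
  have Wr'' : wf_word n (r' ++ [:: rh i]) by rewrite wf_cat Wr' wf_rh.
  have E : forall y, cj (r' ++ [:: rh i]) y = cj r0 (cj [:: rh j; rh i] y).
    by move=> y; rewrite -cj_cat /r' -catA.
  have Hin : forall k, 0 < k < n -> inH n (cj (r' ++ [:: rh i]) (sg k)).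
    by move=> k Hk; apply: inH_conj => //; apply: inH_sg.
  have [Eij|Nij] := eqVneq i j.
    rewrite E; subst j.
    rewrite (Hwd (v := cj r0 (sg i))); first exact: IH1.
    - by rewrite -E; apply: Hin.
    - by apply: inH_conj => //; apply: inH_sg.
    apply: conj_veq; apply: conj_triv; first exact: wf_rh2.
    exact: (veq_rel [::] [::] (@rel_rsq n i ltac:(lia))).
  have [Ef|Nf] := boolP (far i j).
    rewrite E.
    rewrite (Hwd (v := cj r0 (cj [:: rh i] (sg i)))).
    - by rewrite -cj_cat; apply: IH2.
    - by rewrite -E; apply: Hin.
    - by rewrite -cj_cat; apply: inH_conj; [rewrite wf_cat Wr0 wf_rh | apply: inH_sg].
    apply: conj_veq; apply: F2 => //.
  have [Eji|Nji] := eqVneq j i.+1.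
    rewrite (all_idx Wr'' Hi) -(all_idx Wr'' Hj) E; subst j.
    rewrite (Hwd (v := cj r0 (sg i))); first exact: IH1.
    - by rewrite -E; apply: Hin.
    - by apply: inH_conj => //; apply: inH_sg.
    apply: conj_veq; apply: M1; lia.
  have Eij2 : i = j.+1 by move: Nf Nij Nji; rewrite /far; lia.
  rewrite (all_idx Wr'' Hi) -(all_idx Wr'' Hj) E; subst i.
  rewrite (Hwd (v := cj r0 (sg j.+1))); first exact: IH1.
  - by rewrite -E; apply: Hin.
  - by apply: inH_conj => //; apply: inH_sg.
  apply: conj_veq; apply: M2; lia.
split.
  move=> i Hi; rewrite -(P1' i Hi); apply: Hwd.
  - apply: inH_conj; [rewrite wf_cat Wr0 /wf_word /= /valid_letter /=; lia | exact: inH_sg].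
  - apply: inH_conj => //; exact: inH_sg.
  exact: cj_sign.
move=> i Hi; rewrite -(P2' i Hi); apply: Hwd.
- apply: inH_conj; [rewrite !wf_cat Wr0 wf_rh // /wf_word /= /valid_letter /=; lia | exact: inH_sg].
- apply: inH_conj; [rewrite wf_cat Wr' wf_rh // | exact: inH_sg].
rewrite /r' -!catA /=; exact: cj_sign.
Qed.

Definition rhop (w : word) : word := filter (fun p => if p.1 is Rho _ then true else false) w.

Lemma rhop_perm w k : word_perm mu_letter (rhop w) k = word_perm mu_letter w k.
Proof.
elim: w k => [|[x e] w IH] k //=; case: x => i /=; rewrite ?wperm_cons IH //.
Qed.

Lemma rhop_rw w : wf_word n w -> rw n 1 (rhop w).
Proof.
elim: w => [|[x e] w IH] //=; rewrite /wf_word /= => /andP[Hx Hw].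
have H := IH Hw; case: x Hx => i Hx //=.
rewrite /rw /= in H *; rewrite H andbT; move: Hx; rewrite /valid_letter /=; lia.
Qed.

Lemma wf_rhop w : wf_word n w -> wf_word n (rhop w).
Proof. by move=> H; apply: rw_wf; apply: rhop_rw. Qed.

Lemma inH_dec p w : rw n 1 p -> wf_word n w -> inH n (p ++ w ++ winv (p ++ rhop w)).
Proof.
move=> Hp Hw; have Wp := rw_wf Hp; split.
  by rewrite !wf_cat wf_inv wf_cat Wp Hw wf_rhop.
move=> k; rewrite winv_cat !wperm_cat -(rhop_perm w) -(wperm_cat _ (rhop w) (winv (rhop w))) (@wperm_inv mu_letter (rhop w) mu_inv).
by rewrite -wperm_cat (@wperm_inv mu_letter p mu_inv).
Qed.

Lemma psi_sig p i e : rw n 1 p -> 0 < i < n -> psi (cj p [:: (Sig i, e)]) = false.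
Proof.
move=> Hp Hi; have Wp := rw_wf Hp.
case: e; last by have [P1 _] := mainP Hp; exact: P1.
have [P1 _] := mainP Hp.
have := @psi_conj_cat p [:: (Sig i, true)] [:: (Sig i, false)] Wp (inH_sgn true Hi) (inH_sgn false Hi).
have -> : psi (cj p [:: (Sig i, false)]) = false by exact: P1.
rewrite addbF => <-.
have Hv : valid_letter n (Sig i) by rewrite /valid_letter /=; lia.
have Hu : inH n (cj p ([:: (Sig i, true)] ++ [:: (Sig i, false)])).
  apply: inH_conj => //; exact: (inH_cat (inH_sgn true Hi) (inH_sgn false Hi)).
have Hvv : veq n (cj p ([:: (Sig i, true)] ++ [:: (Sig i, false)])) [::].
  apply: veq_trans (conj_veq p (veq_free [::] [::] true Hv)) _.
  exact: cancel_r.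
by rewrite (Hwd Hu inH_nil Hvv) psi_nil.
Qed.

Lemma dec w : forall p, rw n 1 p -> wf_word n w ->
  psi (p ++ w ++ winv (p ++ rhop w)) = false.
Proof.
elim: w => [|[x e] w IH] p Hp.
  move=> _; have Wp := rw_wf Hp; rewrite cats0 /=.
  have Hu : inH n (p ++ winv p).
    by have := inH_dec Hp (isT : wf_word n [::]); rewrite cats0.
  by rewrite (Hwd Hu inH_nil (cancel_r Wp)) psi_nil.
rewrite /wf_word /= => /andP[Hx Hw].
case: x Hx => i Hx /=.
  have Hi : 0 < i < n by move: Hx; rewrite /valid_letter /=; lia.
  have Wp := rw_wf Hp.
  set T := p ++ w ++ winv (p ++ rhop w).
  have HT : inH n T by exact: inH_dec.
  have Hc : inH n (cj p [:: (Sig i, e)]) by apply: inH_conj => //; exact: inH_sgn.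
  have Hu : inH n (p ++ (Sig i, e) :: w ++ winv (p ++ rhop w)).
    have := @inH_dec p ((Sig i, e) :: w) Hp; apply.
    by rewrite /wf_word /= Hx.
  suff Hvv : veq n (p ++ (Sig i, e) :: w ++ winv (p ++ rhop w)) (cj p [:: (Sig i, e)] ++ T).
    by rewrite (Hwd Hu (inH_cat Hc HT) Hvv) Hadd // psi_sig // IH.
  have -> : cj p [:: (Sig i, e)] ++ T = (p ++ [:: (Sig i, e)]) ++ (winv p ++ p) ++ (w ++ winv (p ++ rhop w)).
    by rewrite /cj /T -!catA.
  have -> : p ++ (Sig i, e) :: w ++ winv (p ++ rhop w) = (p ++ [:: (Sig i, e)]) ++ [::] ++ (w ++ winv (p ++ rhop w)).
    by rewrite -!catA.
  apply: veq_ctx; apply: veq_sym; exact: cancel_l.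
have -> : p ++ (Rho i, e) :: w ++ winv (p ++ (Rho i, e) :: rhop w) =
   (p ++ [:: (Rho i, e)]) ++ w ++ winv ((p ++ [:: (Rho i, e)]) ++ rhop w).
  by rewrite -!catA.
apply: IH => //.
rewrite rw_cat Hp /= /rw /= andbT; move: Hx; rewrite /valid_letter /=; lia.
Qed.

Lemma claimA w : inH n w -> psi w = false.
Proof.
move=> Hw; have [Ww Pw] := Hw.
have := @dec w [::] isT Ww; rewrite /=.
have Hr : veq n (rhop w) [::].
  apply: (@coxeter_gen n (n - 1) 1) => //; try lia.
  - exact: rhop_rw.
  - by move=> k; rewrite rhop_perm.
have Hi : veq n (winv (rhop w)) [::].
  apply: veq_trans (cancel_l (wf_rhop Ww)).
  have := veq_catl (winv (rhop w)) (veq_sym Hr); by rewrite cats0.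
have Hu : inH n (w ++ winv (rhop w)) by have := @inH_dec [::] w isT Ww.
have Hvv : veq n (w ++ winv (rhop w)) w by have := veq_catl w Hi; rewrite cats0.
by rewrite (Hwd Hu Hw Hvv).
Qed.

End H.




Definition mpair (a b x y : nat) : bool := ((x == a) && (y == b)) || ((x == b) && (y == a)).

Lemma mpairC a b x y : mpair a b x y = mpair a b y x.
Proof. by rewrite /mpair; case: (x == a); case: (x == b); case: (y == a); case: (y == b). Qed.

Fixpoint cF a b (g : nat -> nat) (w : word) : bool :=
  match w with
  | [::] => false
  | (x, _) :: w' =>
    match x with
    | Sig i => mpair a b (g i) (g i.+1) (+) cF a b (fun k => g (swapn i k)) w'
    | Rho i => cF a b (fun k => g (swapn i k)) w'
    end
  end.

Lemma cF_ext a b w : forall g g', (forall k, g k = g' k) -> cF a b g w = cF a b g' w.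
Proof.
elim: w => [|[x e] w IH] g g' H //=.
case: x => i; rewrite (IH _ (fun k => g' (swapn i k))) ?H //.
Qed.

Lemma cF_cat a b u v : forall g,
  cF a b g (u ++ v) = cF a b g u (+) cF a b (fun k => g (word_perm nu_letter u k)) v.
Proof.
elim: u => [|[x e] u IH] g /=.
  by apply: cF_ext.
by case: x => i; rewrite IH ?addbA.
Qed.

Lemma cF_rel n a b u v : vrel n u v -> forall g, cF a b g u = cF a b g v.
Proof.
case=> {u v} /=.
- move=> i _ _ g; swsimpl.
  rewrite !addbF.
  by case: (mpair a b (g i) (g i.+1)); case: (mpair a b (g i) (g i.+2)); case: (mpair a b (g i.+1) (g i.+2)).
- move=> i j _ _; rewrite /far => Hf g; swsimpl.
  by rewrite !addbF addbC.
- by [].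
- by [].
- by [].
- move=> i j _ _; rewrite /far => Hf g; swsimpl; by [].
- by move=> i _ _ g; swsimpl.
Qed.

Lemma cF_free a b x e g : cF a b g [:: (x, e); (x, ~~ e)] = false.
Proof. by case: x => i //=; swsimpl; rewrite addbF mpairC addbb. Qed.

Lemma cF_veq n a b u v : veq n u v -> forall g, cF a b g u = cF a b g v.
Proof.
elim.
- by [].
- by move=> u' v' _ H g; rewrite H.
- by move=> u' v' w _ H1 _ H2 g; rewrite H1 H2.
- move=> u' v' a' b' H g; rewrite !cF_cat (cF_rel a b H); congr (_ (+) (_ (+) _)).
  by apply: cF_ext => k; rewrite (vrel_nu H).
- move=> u' v' x e _ g; rewrite !cF_cat cF_free /=; congr (_ (+) _).
  by apply: cF_ext => k; rewrite /word_perm /= nu_inv.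
Qed.

Definition phi a b (w : word) := cF a b (fun k => k) w.

Lemma phi_veq n a b u v : veq n u v -> phi a b u = phi a b v.
Proof. by move=> H; rewrite /phi (cF_veq a b H). Qed.

Lemma phi_add n a b u v : inVP n u -> phi a b (u ++ v) = phi a b u (+) phi a b v.
Proof.
case=> _ Pu; rewrite /phi cF_cat; congr (_ (+) _).
by apply: cF_ext => k; rewrite Pu.
Qed.

Lemma combo x1 y1 x2 y2 x3 y3 : exists c1 c2 c3,
  [/\ c1 || c2 || c3,
      (c1 && x1) (+) (c2 && x2) (+) (c3 && x3) = false &
      (c1 && y1) (+) (c2 && y2) (+) (c3 && y3) = false].
Proof.
case: x1; case: y1; case: x2; case: y2; case: x3; case: y3;
first [ by exists true, false, false; split | by exists false, true, false; split
      | by exists false, false, true; split | by exists true, true, false; split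
      | by exists true, false, true; split | by exists false, true, true; split
      | by exists true, true, true; split ].
Qed.

Lemma lin (c1 c2 c3 a1 a2 a3 b1 b2 b3 : bool) :
  (c1 && (a1 (+) b1)) (+) (c2 && (a2 (+) b2)) (+) (c3 && (a3 (+) b3)) =
  ((c1 && a1) (+) (c2 && a2) (+) (c3 && a3)) (+) ((c1 && b1) (+) (c2 && b2) (+) (c3 && b3)).
Proof. by case: c1; case: c2; case: c3; case: a1; case: a2; case: a3; case: b1; case: b2; case: b3. Qed.

Theorem proposition7p1 (n : nat) (hn : (3 <= n)%N) :
  ~ (exists f : word -> word, subgroup_iso n (inH n) (inVP n) f).
Proof.
case=> f [Hmap Hwdf Hmul Hinj Hsurj].
pose g2 := cj [:: rh 1] (sg 1).
have [c1 [c2 [c3 [Hc Hx Hy]]]] :=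
  combo (phi 1 2 (f (sg 1))) (phi 1 2 (f g2)) (phi 1 3 (f (sg 1))) (phi 1 3 (f g2))
        (phi 2 3 (f (sg 1))) (phi 2 3 (f g2)).
pose Phi w := (c1 && phi 1 2 w) (+) (c2 && phi 1 3 w) (+) (c3 && phi 2 3 w).
pose psi u := Phi (f u).
have Hwd : forall u v, inH n u -> inH n v -> veq n u v -> psi u = psi v.
  move=> u v Hu Hv H; have H' := Hwdf u v Hu Hv H.
  by rewrite /psi /Phi !(phi_veq _ _ H').
have Hadd : forall u v, inH n u -> inH n v -> psi (u ++ v) = psi u (+) psi v.
  move=> u v Hu Hv; have H' := Hmul u v Hu Hv.
  rewrite /psi /Phi !(phi_veq _ _ H') !(phi_add _ _ _ (Hmap u Hu)).
  exact: lin.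
have Hz := claimA hn Hwd Hadd Hx Hy.
have key : forall w, inVP n w -> Phi w = false.
  move=> w Hw; have [u Hu Hfu] := Hsurj w Hw.
  by rewrite /Phi -!(phi_veq _ _ Hfu); exact: (Hz u Hu).
have V : forall i, 0 < i < n -> valid_letter n (Rho i) && valid_letter n (Sig i).
  by move=> i Hi; rewrite /valid_letter /=; lia.
have K1 := key [:: rh 1; pos (Sig 1)].
have K2 := key [:: rh 2; rh 1; pos (Sig 1); rh 2].
have K3 := key [:: rh 2; pos (Sig 2)].
rewrite /Phi /phi /= in K1 K2 K3.
have /andP[V1 V1'] := V 1 ltac:(lia).
have /andP[V2 V2'] := V 2 ltac:(lia).
move: Hc K1 K2 K3.
have P1 : inVP n [:: rh 1; pos (Sig 1)].
  by split; [rewrite /wf_word /= V1 V1' | move=> k; rewrite /word_perm /= swapnK].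
have P2 : inVP n [:: rh 2; rh 1; pos (Sig 1); rh 2].
  by split; [rewrite /wf_word /= V1 V1' V2 | move=> k; rewrite /word_perm /= !swapnK].
have P3 : inVP n [:: rh 2; pos (Sig 2)].
  by split; [rewrite /wf_word /= V2 V2' | move=> k; rewrite /word_perm /= swapnK].
move=> Hc /(_ P1) K1 /(_ P2) K2 /(_ P3) K3.
clear -Hc K1 K2 K3. by move: Hc K1 K2 K3; case: c1; case: c2; case: c3.
Qed.
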